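(* Let $n$ be an odd positive integer and let $\mathcal{B}$ be a balanced bipartite graph on $2n$ vertices with parts $V_1$ and $V_2$ such that $\delta(\mathcal{B})\geq\frac{n+1}{2}$. Suppose that each of $V_1$ and $V_2$ contains at most one vertex of degree exactly $\frac{n+1}{2}$, i.e. $\max\{|\{v\in V_1: d_{\mathcal{B}}(v)=\frac{n+1}{2}\}|,\ |\{u\in V_2: d_{\mathcal{B}}(u)=\frac{n+1}{2}\}|\}\leq 1$. Then $f(\mathcal{B})=n+1$.
   Context: All graphs are finite and simple. A balanced bipartite graph on $2n$ vertices is a bipartite graph with a given bipartition $(V_1,V_2)$ where $|V_1|=|V_2|=n$. $d_G(v)$ is the degree of $v$ and $\delta(G)$ the minimum degree of $G$. The forest number $f(G)$ is the maximum cardinality of a subset $S\subseteq V(G)$ such that the induced subgraph $G[S]$ is a forest. *)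

(* Defs.v *)
From mathcomp Require Import all_boot.
Set Implicit Arguments. Unset Strict Implicit. Unset Printing Implicit Defensive.

Definition simple_graph (T : finType) (e : rel T) : Prop :=
  symmetric e /\ irreflexive e.

Definition deg (T : finType) (e : rel T) (v : T) : nat := #|[set u | e v u]|.

Definition min_deg_ge (T : finType) (e : rel T) (k : nat) : Prop :=
  forall v, k <= deg e v.

Definition cycle_in (T : finType) (e : rel T) (S : {set T}) (c : seq T) : bool :=
  [&& 3 <= size c, uniq c, all (fun x => x \in S) c & cycle e c].

Definition induces_forest (T : finType) (e : rel T) (S : {set T}) : Prop :=
  forall c : seq T, ~~ cycle_in e S c.

(* f(G) = k : k is the maximum cardinality of a set inducing a forest. *)
Definition forest_number_is (T : finType) (e : rel T) (k : nat) : Prop :=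
  (exists S : {set T}, induces_forest e S /\ #|S| = k) /\
  (forall S : {set T}, induces_forest e S -> #|S| <= k).

Definition balanced_bipartite (T : finType) (e : rel T) (V1 V2 : {set T}) (n : nat) : Prop :=
  simple_graph e /\ V1 :&: V2 = set0 /\ V1 :|: V2 = [set: T] /\
  #|V1| = n /\ #|V2| = n /\
  (forall x y, e x y -> (x \in V1) = (y \in V2)).

(* Main.v *)
Require Import Defs.
From mathcomp Require Import all_boot zify.

Section G.
Variables (T : finType) (e : rel T).
Hypothesis esym : symmetric e.
Hypothesis eirr : irreflexive e.

Definition dS (S : {set T}) v := #|[set u in S | e v u]|.

Lemma cyc_step (S : {set T}) x p :
  2 <= dS S x ->
  uniq (x :: p) -> all (fun y => y \in S) (x :: p) -> path e x p ->
  (exists c, cycle_in e S c) \/ (exists y, [/\ y \in S, y \notin x :: p & e y x]).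
Proof.
move=> Hd Hu Ha Hp.
have /card_gt1P [y1 [y2 [H1 H2 H12]]] := Hd.
move: H1 H2; rewrite !inE => /andP[S1 e1] /andP[S2 e2].
case: (boolP (y1 \in x :: p)) => m1; last by right; exists y1; rewrite esym.
case: (boolP (y2 \in x :: p)) => m2; last by right; exists y2; rewrite esym.
left.
have [y [yS ey ym yh]] : exists y, [/\ y \in S, e x y, y \in x :: p & y != head x p].
  case: (eqVneq y1 (head x p)) => h1.
    by exists y2; split => //; rewrite -h1 eq_sym.
  by exists y1.
have yx : y != x by apply/eqP => yx; move: ey; rewrite yx eirr.
move: ym; rewrite inE (negbTE yx) /= => yp.
move: Hu Ha Hp yh; case/splitPr: yp => p1 p2 Hu Ha Hp yh.
exists (x :: rcons p1 y).
rewrite /cycle_in /= size_rcons.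
case: p1 Hu Ha Hp yh => [|z p1] Hu Ha Hp yh; first by rewrite /= eqxx in yh.
apply/and4P; split => //.
- move: Hu; rewrite -cat_rcons -cat_cons cat_uniq; by case/andP.
- move: Ha; rewrite -cat_rcons -cat_cons all_cat; by case/andP.
- rewrite rcons_path last_rcons esym ey andbT.
  move: Hp; rewrite -cat_rcons cat_path; by case/andP.
Qed.

Lemma cyc_ind (S : {set T}) :
  (forall v, v \in S -> 2 <= dS S v) ->
  forall m x p, #|S| - size (x :: p) <= m ->
  uniq (x :: p) -> all (fun y => y \in S) (x :: p) -> path e x p ->
  exists c, cycle_in e S c.
Proof.
move=> Hd; elim=> [|m IH] x p Hm Hu Ha Hp;
  (have xS : x \in S by move: Ha => /= /andP[]);
  (case: (@cyc_step S x p (Hd x xS) Hu Ha Hp) => // -[y [yS yn eyx]]).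
- have : uniq (y :: x :: p) by rewrite cons_uniq yn Hu.
  move=> U; have := uniq_leq_size U (s2 := enum S).
  rewrite -cardE /= => H.
  have : size (y :: x :: p) <= #|S|.
    apply: H => z; rewrite mem_enum inE => /orP[/eqP->//|].
    by move/(allP Ha).
  move: Hm => /=; lia.
- apply: (IH y (x :: p)).
  + move: Hm => /=; lia.
  + by rewrite cons_uniq yn Hu.
  + by move: Ha => /= ->; rewrite yS.
  + by move: Hp => /= ->; rewrite eyx.
Qed.

Lemma cyc_exists (S : {set T}) :
  (forall v, v \in S -> 2 <= dS S v) -> S != set0 -> exists c, cycle_in e S c.
Proof.
move=> Hd /set0Pn [x xS].
by apply: (@cyc_ind S Hd #|S| x [::]) => //=; [lia | rewrite xS].
Qed.

Definition ES (S : {set T}) := \sum_(v in S) dS S v.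

Lemma sum_ind (A : {set T}) (P : pred T) :
  \sum_(u in A) (P u : nat) = #|[set u in A | P u]|.
Proof.
rewrite -sum1_card big_mkcond [RHS]big_mkcond /=; apply: eq_bigr => u _; rewrite inE.
by case: (u \in A); case: (P u).
Qed.

Lemma ES_del (S : {set T}) v : v \in S -> ES S = ES (S :\ v) + 2 * dS S v.
Proof.
move=> vS; rewrite /ES (bigD1 v) //=.
have -> : \sum_(i in S | i != v) dS S i = \sum_(i in S :\ v) (dS (S :\ v) i + e v i).
  rewrite [RHS](eq_bigl (fun i => (i \in S) && (i != v))); last by move=> i; rewrite !inE andbC.
  apply: eq_bigr => i /andP[iS iv].
  rewrite /dS (cardsD1 v) addnC; congr (_ + _).
  - congr #|pred_of_set _|; apply/setP => u; rewrite !inE; by case: (u == v).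
  - by rewrite !inE vS esym; case: (e v i).
rewrite big_split /= sum_ind.
have -> : #|[set u in S :\ v | e v u]| = dS S v.
  rewrite /dS; congr #|pred_of_set _|; apply/setP => u; rewrite !inE.
  by case: (eqVneq u v) => [->|]; rewrite ?eirr ?andbF.
lia.
Qed.

Lemma forest_sub (S S' : {set T}) : S' \subset S -> induces_forest e S -> induces_forest e S'.
Proof.
move=> sub HF c; apply/negP => /and4P[c3 cu ca cc].
have := HF c; rewrite /cycle_in c3 cu cc andbT /= => /negP; apply.
by apply/allP => x /(allP ca); apply: (subsetP sub).
Qed.

Lemma dS_le (S : {set T}) v : v \in S -> dS S v <= #|S :\ v|.
Proof.
move=> vS; apply: subset_leq_card; apply/subsetP => u; rewrite !inE => /andP[uS evu].
rewrite uS andbT; apply/eqP => uv; by rewrite uv eirr in evu.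
Qed.

Lemma forest_bound k : forall S : {set T}, #|S| = k -> induces_forest e S -> S != set0 ->
  ES S + 2 <= 2 * #|S|.
Proof.
elim: k => [|k IH] S HS HF Sn.
  by move: Sn; rewrite -card_gt0 HS.
have [v [vS dv]] : exists v, v \in S /\ dS S v <= 1.
  case: (boolP [forall v in S, 2 <= dS S v]) => H.
    have [c Hc] : exists c, cycle_in e S c.
      apply: cyc_exists => // v vS; by move/forall_inP: H; apply.
    by move: (HF c); rewrite Hc.
  move/forall_inPn: H => [v vS H]; exists v; split => //; by rewrite leqNgt.
rewrite (@ES_del S v vS).
have Hc := cardsD1 v S; rewrite vS in Hc.
case: (eqVneq (S :\ v) set0) => H0.
  have := @dS_le S v vS; rewrite H0 cards0 leqn0 => /eqP ->.
  rewrite /ES big_set0; lia.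
have := IH (S :\ v) ltac:(lia) (@forest_sub S (S :\ v) (subD1set S v) HF) H0.
lia.
Qed.

Lemma deg_bound (S W : {set T}) v : (forall u, e v u -> u \in W) ->
  deg e v <= dS S v + #|W :\: S|.
Proof.
move=> H; rewrite /deg /dS.
apply: (@leq_trans #|[set u in S | e v u] :|: (W :\: S)|); last by rewrite cardsU; lia.
apply: subset_leq_card; apply/subsetP => u; rewrite !inE => evu.
by rewrite evu (H u evu); case: (u \in S).
Qed.
End G.
Arguments ES {T}.
Arguments dS {T}.
Arguments sum_ind {T}.
Lemma arith1 k x s : x <= k -> s <= k.*2.+2 ->
  (x + 2) * k.+2 <= s + (x + 2) * x + 1 -> False.
Proof.
move=> hx hs h; have hm : x * x <= x * k by rewrite leq_mul2l hx orbT.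
nia.
Qed.
Lemma arith k a b s : a + b = k.*2.+3 -> a <= k.*2.+1 -> b <= k.*2.+1 -> s <= k.*2.+2 ->
  a * k.+2 <= s + a * (k.*2.+1 - b) + 1 -> b * k.+2 <= s + b * (k.*2.+1 - a) + 1 -> False.
Proof.
move=> hab ha hb hs h1 h2.
case: (leqP a k.+2) => H.
- have [x ex] : exists x, a = x + 2 by exists (a - 2); lia.
  have eb : k.*2.+1 - b = x by lia.
  rewrite eb ex in h1; apply: (@arith1 k x s) => //; lia.
- have [x ex] : exists x, b = x + 2 by exists (b - 2); lia.
  have ea : k.*2.+1 - a = x by lia.
  rewrite ea ex in h2; apply: (@arith1 k x s) => //; lia.
Qed.

Theorem theorem2p8 (T : finType) (e : rel T) (V1 V2 : {set T}) (n : nat) :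
  odd n ->
  balanced_bipartite e V1 V2 n ->
  min_deg_ge e n.+1./2 ->
  #|[set v in V1 | deg e v == n.+1./2]| <= 1 ->
  #|[set u in V2 | deg e u == n.+1./2]| <= 1 ->
  forest_number_is e n.+1.
Proof.
move=> on [[esym eirr] [HI [HU [c1 [c2 Hb]]]]] Hmin D1 D2.
set k := n./2.
have nk : n = k.*2.+1 by rewrite -[LHS]odd_double_half on.
have hk : n.+1./2 = k.+1 by rewrite nk -doubleS doubleK.
rewrite hk in Hmin D1 D2.
have inV2 : forall x, (x \in V2) = (x \notin V1).
  move=> x; have : x \in V1 :|: V2 by rewrite HU inE.
  rewrite inE; case: (boolP (x \in V1)) => //= x1 _.
  apply/negP => x2; have : x \in V1 :&: V2 by rewrite inE x1 x2.
  by rewrite HI inE.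
have Eb : forall x y, e x y -> (x \in V1) = (y \notin V1).
  by move=> x y /Hb ->; rewrite inV2.
split.
- have : 0 < #|V1| by rewrite c1 nk.
  case/card_gt0P => v v1.
  exists (v |: V2); split; last first.
    rewrite cardsU1 inV2 v1 /= c2; lia.
  move=> c; apply/negP => /and4P[c3 cu ca cc].
  have nadj : forall x y, x \in v |: V2 -> y \in v |: V2 -> x != v -> y != v -> ~~ e x y.
    move=> x y; rewrite !inE => /orP[/eqP->|xV] /orP[/eqP->|yV]; rewrite ?eqxx // => _ _.
    rewrite inV2 in xV; rewrite inV2 in yV.
    apply/negP => /Eb; by rewrite (negbTE xV) yV.
  have ca' := allP ca.
  case: c c3 cu ca cc ca' => [|c0 [|c1' [|c2' r]]] //= _.
  move=> /and3P[u0 u1 ur] _ /and3P[e01 e12 Hp] ca'.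
  move: Hp; rewrite rcons_path => /andP[_ el].
  have m0 : c0 \in v |: V2 by apply: ca'; rewrite inE eqxx.
  have m1 : c1' \in v |: V2 by apply: ca'; rewrite !inE eqxx orbT.
  have m2 : c2' \in v |: V2 by apply: ca'; rewrite !inE eqxx !orbT.
  have ml : last c2' r \in c2' :: r by exact: mem_last.
  have mL : last c2' r \in v |: V2 by apply: ca'; rewrite !inE; rewrite inE in ml; rewrite ml !orbT.
  case: (eqVneq c0 v) => h0.
    subst c0.
    have h1 : c1' != v by apply/eqP => h; rewrite h !inE eqxx in u0.
    have h2 : c2' != v by apply/eqP => h; rewrite h !inE eqxx orbT in u0.
    by move: (nadj _ _ m1 m2 h1 h2); rewrite e12.
  case: (eqVneq c1' v) => h1; last by move: (nadj _ _ m0 m1 h0 h1); rewrite e01.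
  subst c1'.
  have hl : last c2' r != v by apply/eqP => h; rewrite -h ml in u1.
  by move: (nadj _ _ mL m0 hl h0); rewrite el.
- move=> S HF; rewrite leqNgt; apply/negP => big.
  have /card_geqP [s [us ss subs]] : n.+2 <= #|S| by [].
  set S' := [set x in s].
  have cS' : #|S'| = n.+2 by rewrite cardsE; move/card_uniqP: us ->.
  have HF' : induces_forest e S'.
    apply: (@forest_sub T e S); last exact: HF.
    by apply/subsetP => x; rewrite inE; apply: subs.
  have nz : S' != set0 by rewrite -card_gt0 cS'.
  have FB := @forest_bound T e esym eirr _ S' cS' HF' nz.
  set S1 := S' :&: V1; set S2 := S' :\: V1.
  have hES : ES e S' = \sum_(v in S1) dS e S' v + \sum_(v in S2) dS e S' v.
    by rewrite /ES (big_setID V1).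
  have d1 : forall v, v \in V1 -> dS e S' v = \sum_(u in S2) (e v u : nat).
    move=> v vV; rewrite sum_ind /dS; congr #|pred_of_set _|; apply/setP => u; rewrite !inE.
    case evu: (e v u); rewrite ?andbF //= !andbT.
    by move: (Eb _ _ evu); rewrite vV => <-.
  have d2 : forall u, u \notin V1 -> dS e S' u = \sum_(v in S1) (e u v : nat).
    move=> u uV; rewrite sum_ind /dS; congr #|pred_of_set _|; apply/setP => v; rewrite !inE.
    case euv: (e u v); rewrite ?andbF //= !andbT.
    move: (Eb _ _ euv); rewrite (negbTE uV) andbC; by case: (v \in V1).
  have Seq : \sum_(v in S1) dS e S' v = \sum_(v in S2) dS e S' v.
    transitivity (\sum_(v in S1) \sum_(u in S2) (e v u : nat)).
      by apply: eq_bigr => v; rewrite inE => /andP[_ vV]; exact: d1.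
    rewrite exchange_big; symmetry; apply: eq_bigr => u; rewrite inE => /andP[uV _].
    by rewrite d2 //; apply: eq_bigr => v _; rewrite esym.
  have cab : #|S1| + #|S2| = n.+2 by rewrite cardsID.
  have ca : #|S1| <= n by rewrite -c1; apply: subset_leq_card; exact: subsetIr.
  have cb : #|S2| <= n.
    rewrite -c2; apply: subset_leq_card; apply/subsetP => u; rewrite !inE inV2; by case/andP.
  have Bnd : forall (A W D : {set T}),
      (forall v, v \in A -> forall u, e v u -> u \in W) ->
      (forall v, v \in A -> deg e v == k.+1 -> v \in D) -> #|D| <= 1 ->
      #|A| * k.+2 <= \sum_(v in A) dS e S' v + #|A| * #|W :\: S'| + 1.
    move=> A W D HW HD hD.
    apply: (@leq_trans (\sum_(v in A) (dS e S' v + #|W :\: S'| + (v \in D)))).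
      rewrite -sum_nat_const; apply: leq_sum => v vA.
      have h1 := Hmin v; have h2 := @deg_bound T e S' W v (HW v vA).
      case: (eqVneq (deg e v) k.+1) => h; last by lia.
      rewrite (HD v vA) ?h ?eqxx //; lia.
    rewrite !big_split /= sum_nat_const sum_ind.
    have : #|[set v in A | v \in D]| <= #|D|.
      by apply: subset_leq_card; apply/subsetP => v; rewrite inE => /andP[].
    lia.
  have B1 : #|S1| * k.+2 <= \sum_(v in S1) dS e S' v + #|S1| * (k.*2.+1 - #|S2|) + 1.
    have -> : k.*2.+1 - #|S2| = #|V2 :\: S'|.
      rewrite cardsD c2 nk; congr (_ - #|pred_of_set _|); apply/setP => u; rewrite !inE inV2 andbC //.
    apply: (Bnd _ _ [set v in V1 | deg e v == k.+1]) => //.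
    - move=> v; rewrite inE => /andP[_ vV] u /Eb; rewrite vV inV2 => <- //.
    - by move=> v; rewrite !inE => /andP[_ ->] ->.
  have B2 : #|S2| * k.+2 <= \sum_(v in S2) dS e S' v + #|S2| * (k.*2.+1 - #|S1|) + 1.
    have -> : k.*2.+1 - #|S1| = #|V1 :\: S'|.
      rewrite cardsD c1 nk; congr (_ - #|pred_of_set _|); apply/setP => u; rewrite !inE andbC //.
    apply: (Bnd _ _ [set v in V2 | deg e v == k.+1]) => //.
    - move=> v; rewrite inE => /andP[vV _] u /Eb; rewrite (negbTE vV); by case: (u \in V1).
    - by move=> v; rewrite !inE inV2 => /andP[-> _] ->.
  apply: (@arith k #|S1| #|S2| (\sum_(v in S2) dS e S' v)); try lia.
Qed.
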